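(* Let $P,Q$ be nonzero coprime integers with $\Delta:=P^2-4Q\neq0$, such that $\alpha/\beta$ is not a root of unity, where $\alpha,\beta$ are the roots of $x^2-Px+Q$. Let $(U_n)$ be the Lucas sequence $U_n=(\alpha^n-\beta^n)/(\alpha-\beta)$. Then for all positive integers $n,k$ with $n\ge k$, \[\mathrm{lcm}(U_n,U_{n-1},\dots,U_{n-k+1})=\mathrm{lcm}\left\{U_m\binom{n}{m}_{\boldsymbol U}:\ 1\le m\le k\right\}.\]
   Context: $U_0=0$, $U_1=1$, $U_{n+2}=PU_{n+1}-QU_n$. For $j\ge0$, $[j]_{\boldsymbol U}!:=U_1\cdots U_j$ ($[0]_{\boldsymbol U}!=1$), and for $n\ge k\ge 1$, $\binom{n}{k}_{\boldsymbol U}:=\frac{U_nU_{n-1}\cdots U_{n-k+1}}{U_1U_2\cdots U_k}=\frac{[n]_{\boldsymbol U}!}{[k]_{\boldsymbol U}![n-k]_{\boldsymbol U}!}$ (these are integers when $\gcd(P,Q)=1$). *)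

(* Defs.v *)
From mathcomp Require Import all_boot all_order all_algebra all_field.
Set Implicit Arguments. Unset Strict Implicit. Unset Printing Implicit Defensive.
Import Order.TTheory GRing.Theory Num.Theory.
Local Open Scope ring_scope.

Fixpoint lucasU (P Q : int) (n : nat) : int :=
  match n with
  | 0%N => 0
  | 1%N => 1
  | (m.+1 as n').+1 => P * lucasU P Q n' - Q * lucasU P Q m
  end.

Definition lucas_fact (P Q : int) (j : nat) : int :=
  \prod_(1 <= i < j.+1) lucasU P Q i.

(* Lucasnomial binom(n,k)_U = U_n U_{n-1} ... U_{n-k+1} / (U_1 ... U_k),
   an integer when gcd(P,Q)=1; the quotient is exact integer division. *)
Definition lucas_binom (P Q : int) (n k : nat) : int :=
  ((\prod_(0 <= i < k) lucasU P Q (n - i)) %/ lucas_fact P Q k)%Z.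

Definition lcm_list (s : seq int) : int := foldr lcmz 1 s.

(* Main.v *)
Require Import Defs.
From mathcomp Require Import all_boot all_order all_algebra all_field.
From mathcomp Require Import ring lra zify.
From Stdlib Require Import Classical.
Set Implicit Arguments. Unset Strict Implicit. Unset Printing Implicit Defensive.
Import Order.TTheory GRing.Theory Num.Theory.
Local Open Scope ring_scope.

Section Lucas.
Variables P Q : int.
Local Notation U := (lucasU P Q).

Lemma U_SS n : U n.+2 = P * U n.+1 - Q * U n.
Proof. by []. Qed.

Lemma U_add m n : U (m + n).+1 = U m.+1 * U n.+1 - Q * U m * U n.
Proof.
elim: m {-2}m (leqnn m) => [|M IH] m hm.
  by move: hm; rewrite leqn0 => /eqP ->; rewrite /= add0n; ring.
case: m hm => [|[|m]] hm.
- by rewrite /= add0n; ring.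
- by rewrite add1n U_SS /=; ring.
have -> : (m.+2 + n).+1 = (m + n).+3 by lia.
rewrite U_SS.
have -> : (m + n).+2 = (m.+1 + n).+1 by lia.
rewrite (IH m.+1); last by lia.
rewrite (IH m); last by lia.
rewrite !U_SS; ring.
Qed.

Hypothesis cPQ : coprimez P Q.

Lemma coprime_UQ n : (0 < n)%N -> coprimez (U n) Q.
Proof.
elim: n => // -[|n] IH _; first by rewrite /coprimez /= gcd1z.
rewrite U_SS /coprimez gcdzC.
have -> : P * U n.+1 - Q * U n = (- U n) * Q + P * U n.+1 by ring.
rewrite gcdzMDl Gauss_gcdzr; last by rewrite /coprimez gcdzC.
by rewrite gcdzC; exact: IH.
Qed.

Lemma coprime_US n : coprimez (U n.+1) (U n).
Proof.
elim: n => [|n IH]; first by rewrite /coprimez /= gcd1z.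
rewrite U_SS /coprimez.
have -> : P * U n.+1 - Q * U n = P * U n.+1 + (- Q * U n) by ring.
rewrite gcdzC gcdzMDl Gauss_gcdzr.
  exact: IH.
by rewrite coprimezN coprime_UQ.
Qed.

Lemma gcd_step m n : gcdz (U (m + n).+1) (U n.+1) = gcdz (U m) (U n.+1).
Proof.
rewrite U_add gcdzC.
have -> : U m.+1 * U n.+1 - Q * U m * U n = U m.+1 * U n.+1 + (- Q * U n) * U m by ring.
rewrite gcdzMDl Gauss_gcdzr; first by rewrite gcdzC.
by rewrite coprimezMr coprimezN coprime_US andbT coprime_UQ.
Qed.

Definition u x := `|U x|%N.

Lemma u_step a b : (0 < b)%N -> gcdn (u (a + b)) (u b) = gcdn (u a) (u b).
Proof.
case: b => // b _; have := gcd_step a b; rewrite /gcdz addnS.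
by move=> [].
Qed.

Lemma u_gcd a b : gcdn (u a) (u b) = u (gcdn a b).
Proof.
move: {2}(a + b)%N (leqnn (a + b)) => N; elim: N a b => [|N IH] a b hab.
  by have [-> ->] : a = 0%N /\ b = 0%N by lia.
have [->|ha] := posnP a; first by rewrite gcd0n /u /= gcd0n.
have [->|hb] := posnP b; first by rewrite gcdn0 /u /= gcdn0.
have [hle|hlt] := leqP b a.
  have -> : a = ((a - b) + b)%N by lia.
  rewrite u_step // IH; last by lia.
  by rewrite gcdnC [in RHS]gcdnC addnC gcdnDl.
have -> : b = ((b - a) + a)%N by lia.
rewrite gcdnC u_step // IH; last by lia.
  by rewrite gcdnDr gcdnC.
Qed.

Lemma u_dvd a b : (a %| b)%N -> (u a %| u b)%N.
Proof. by move=> h; apply/gcdn_idPl; rewrite u_gcd (gcdn_idPl h). Qed.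

End Lucas.
Lemma binet (P Q : int) (a b : algC) : a + b = P%:~R -> a * b = Q%:~R ->
  forall n, (lucasU P Q n)%:~R * (a - b) = a ^+ n - b ^+ n.
Proof.
move=> hP hQ n.
suff: (lucasU P Q n)%:~R * (a - b) = a ^+ n - b ^+ n /\
      (lucasU P Q n.+1)%:~R * (a - b) = a ^+ n.+1 - b ^+ n.+1 by case.
elim: n => [|n [IH1 IH2]]; first by split => /=; rewrite ?mul0r ?mul1r ?expr0 ?expr1 ?subrr.
split => //.
rewrite /= intrB !intrM -hP -hQ mulrBl -!mulrA IH1 IH2 !exprS; ring.
Qed.

Lemma U_neq0 (P Q : int) : Q != 0 -> P ^+ 2 - 4 * Q != 0 ->
  (forall alpha beta : algC,
     alpha + beta = P%:~R -> alpha * beta = Q%:~R ->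
     forall r : nat, (0 < r)%N -> (alpha / beta) ^+ r != 1) ->
  forall n, (0 < n)%N -> lucasU P Q n != 0.
Proof.
move=> hQ hD H n hn.
pose s : algC := sqrtC (P ^+ 2 - 4 * Q)%:~R.
have hs : s ^+ 2 = P%:~R ^+ 2 - 4 * Q%:~R.
  by rewrite sqrtCK intrB intrM rmorphXn.
pose a := (P%:~R + s) / 2; pose b := (P%:~R - s) / 2.
have h2 : (2 : algC) != 0 by rewrite pnatr_eq0.
have hab : a + b = P%:~R by rewrite /a /b; field.
have hab2 : a * b = Q%:~R.
  rewrite /a /b; apply: (mulIf h2); apply: (mulIf h2).
  by rewrite -[RHS]subr0 -(subrr (s ^+ 2)) {2}hs; field.
have hs0 : s != 0.
  apply: contra hD => /eqP s0; move: hs; rewrite s0 expr0n /= => /eqP.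
  rewrite eq_sym => h; rewrite -(intr_eq0 algC) intrB intrM rmorphXn. exact: h.
have hb0 : b != 0.
  apply: contraTneq hQ => b0; move: hab2; rewrite b0 mulr0 => /eqP.
  by rewrite eq_sym intr_eq0 => /eqP ->.
apply/negP => /eqP hU.
have := binet hab hab2 n; rewrite hU mul0r => /eqP; rewrite eq_sym subr_eq0 => /eqP han.
have := H a b hab hab2 n hn; rewrite expr_div_n han divff ?eqxx //.
by rewrite expf_neq0.
Qed.
Local Close Scope ring_scope.

Lemma cntU r a : \sum_(i < a) (r %| i.+1) = a %/ r.
Proof.
have [->|rp] := posnP r.
  by rewrite divn0 big1 // => i _; rewrite dvd0n.
elim: a => [|a IH]; first by rewrite big_ord0 div0n.
by rewrite big_ord_recr /= IH divnS // addnC.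
Qed.

Lemma cntD r n m : m <= n -> \sum_(i < m) (r %| n - i) = n %/ r - (n - m) %/ r.
Proof.
have [->|rp] := posnP r.
  by move=> hm; rewrite !divn0 subnn big1 // => i _; rewrite dvd0n; have := ltn_ord i; case: eqP => //; lia.
elim: m => [|m IH] hm; first by rewrite big_ord0 subn0 subnn.
rewrite big_ord_recr /= IH; last by lia.
have e : n - m = (n - m.+1).+1 by lia.
have le1 : (n - m) %/ r <= n %/ r by apply: leq_div2r; lia.
move: le1; rewrite e divnS //.
move: (n %/ r) ((n - m.+1) %/ r) (r %| (n - m.+1).+1) => X Z c.
case: c => /=; lia.
Qed.

Lemma cnt_ineq r n m : 0 < m <= n ->
  let A := \sum_(i < m) (r %| n - i) in
  let B := \sum_(i < m) (r %| i.+1) in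
  B <= A /\ (r %| m) + A <= (0 < A) + B.
Proof.
move=> hm A B; rewrite /A /B cntU cntD; last by lia.
have [->|rp] := posnP r.
  by rewrite !divn0 dvd0n subnn; have -> : (m == 0) = false by lia.
have e : n %/ r = (n - m + m) %/ r by congr divn; lia.
rewrite e divnD //.
have [dm|ndm] := boolP (r %| m).
  have hm0 : m %% r = 0 by apply/eqP.
  have h1 : 0 < m %/ r by rewrite divn_gt0 // dvdn_leq //; lia.
  have hlt := ltn_pmod (n - m) rp.
  rewrite hm0 addn0 (leqNgt r) hlt /= addn0.
  move: h1; move: ((n - m) %/ r) (m %/ r) => X Y; lia.
move: ((n - m) %/ r) (m %/ r) (r <= (n - m) %% r + m %% r) => X Y c.
case: c => /=; lia.
Qed.

Lemma sum_lt N L : \sum_(t < N) (t < L) = minn N L.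
Proof.
elim: N => [|N IH]; first by rewrite big_ord0 min0n.
by rewrite big_ord_recr /= IH; lia.
Qed.
Section Abs.
Variable u : nat -> nat.
Hypothesis u0 : u 0 = 0.
Hypothesis upos : forall x, 0 < x -> 0 < u x.
Hypothesis ugcd : forall a b, gcdn (u a) (u b) = u (gcdn a b).

Lemma udvd a b : a %| b -> u a %| u b.
Proof. by move=> h; apply/gcdn_idPl; rewrite ugcd (gcdn_idPl h). Qed.

Lemma level d : exists r, forall x, (d %| u x) = (r %| x).
Proof.
have [ex|nex] := classic (exists x, (0 < x) && (d %| u x)).
  case: (ex_minnP ex) => r /andP[rpos hr] rmin; exists r => x.
  apply/idP/idP; last by move=> /udvd h; apply: dvdn_trans h.
  have [->|xpos] := posnP x; first by rewrite dvdn0.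
  move=> hx; set g := gcdn r x.
  have gpos : 0 < g by rewrite gcdn_gt0 rpos.
  have dg : d %| u g by rewrite -ugcd dvdn_gcd hr hx.
  have rg : r <= g by apply: rmin; rewrite gpos dg.
  have gr : g <= r by apply: dvdn_leq => //; apply: dvdn_gcdl.
  have -> : r = g by apply/eqP; rewrite eqn_leq rg gr.
  exact: dvdn_gcdr.
exists 0 => x; rewrite dvd0n.
have [->|xpos] := posnP x; first by rewrite u0 dvdn0.

by apply/negbTE/negP => hx; apply: nex; exists x; rewrite xpos hx.
Qed.


Lemma logn_prod p m (f : nat -> nat) : (forall i, i < m -> 0 < f i) ->
  logn p (\prod_(i < m) f i) = \sum_(i < m) logn p (f i).
Proof.
elim: m => [|m IH] hf; first by rewrite !big_ord0 logn1.
rewrite !big_ord_recr /= lognM ?IH //.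
- by move=> i hi; apply: hf; lia.
- by apply: prodn_gt0 => i; apply: hf; have := ltn_ord i; lia.
- by apply: hf.
Qed.

Lemma e_decomp p N x : prime p -> 0 < x -> logn p (u x) <= N ->
  logn p (u x) = \sum_(t < N) (p ^ t.+1 %| u x).
Proof.
move=> pp xp hN.
rewrite (eq_bigr (fun t : 'I_N => (t < logn p (u x)) : nat)); last first.
  by move=> t _; rewrite pfactor_dvdn // upos.
rewrite sum_lt; lia.
Qed.

Lemma key p n m N L : prime p -> 0 < m <= n ->
  (forall x, 0 < x <= n -> logn p (u x) <= N) ->
  (forall i, i < m -> logn p (u (n - i)) <= L) -> L <= N ->
  \sum_(i < m) logn p (u i.+1) <= \sum_(i < m) logn p (u (n - i)) /\
  logn p (u m) + \sum_(i < m) logn p (u (n - i)) <= L + \sum_(i < m) logn p (u i.+1).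
Proof.
move=> pp hm hN hL hLN.
rewrite [\sum_(i < m) logn p (u (n - i))](eq_bigr (fun i : 'I_m => \sum_(t < N) (p ^ t.+1 %| u (n - i)))); last first.
  by move=> i _; apply: e_decomp => //; have := ltn_ord i; [lia | move=> ?; apply: hN; lia].
rewrite [\sum_(i < m) logn p (u i.+1)](eq_bigr (fun i : 'I_m => \sum_(t < N) (p ^ t.+1 %| u i.+1))); last first.
  by move=> i _; apply: e_decomp => //; have := ltn_ord i; move=> ?; apply: hN; lia.
rewrite (e_decomp pp (_ : 0 < m) (hN m _)); try lia.
have -> : L = \sum_(t < N) (t < L) by rewrite sum_lt; lia.
rewrite [\sum_(i < m) \sum_(t < N) (_ %| u (n - i))]exchange_big [\sum_(i < m) \sum_(t < N) (_ %| u i.+1)]exchange_big /=.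
rewrite -!big_split /=; split; apply: leq_sum => t _.
  have [r hr] := level (p ^ t.+1).
  rewrite (eq_bigr (fun i : 'I_m => (r %| i.+1) : nat)); last by move=> i _; rewrite hr.
  rewrite [X in _ <= X](eq_bigr (fun i : 'I_m => (r %| n - i) : nat)); last by move=> i _; rewrite hr.
  by have [] := cnt_ineq r hm.
have [r hr] := level (p ^ t.+1).
have [tL|tL] := ltnP t L.
  rewrite hr [X in _ <= _ + X](eq_bigr (fun i : 'I_m => (r %| i.+1) : nat)); last by move=> i _; rewrite hr.
  rewrite (eq_bigr (fun i : 'I_m => (r %| n - i) : nat)); last by move=> i _; rewrite hr.
  have [_ h] := cnt_ineq r hm; apply: (leq_trans h); rewrite leq_add2r; by case: (0 < _).
have A0 : \sum_(i < m) (p ^ t.+1 %| u (n - i)) = 0.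
  apply: big1 => i _; apply/eqP; rewrite eqb0; rewrite pfactor_dvdn //; last by apply: upos; have := ltn_ord i; lia.
  have := hL i (ltn_ord i); lia.
rewrite A0 addn0 add0n hr.
rewrite (eq_bigr (fun i : 'I_m => (r %| i.+1) : nat)); last by move=> i _; rewrite hr.
rewrite cntU; case: (boolP (r %| m)) => //= rm.
have rp : 0 < r by case: r rm hr => //; rewrite dvd0n; lia.
by rewrite divn_gt0 // dvdn_leq //; case/andP: hm.
Qed.


Definition num n m := \prod_(i < m) u (n - i).
Definition den m := \prod_(i < m) u i.+1.

Lemma num_pos n m : m <= n -> 0 < num n m.
Proof. by move=> h; apply: prodn_gt0 => i; apply: upos; have := ltn_ord i; lia. Qed.

Lemma den_pos m : 0 < den m.
Proof. by apply: prodn_gt0 => i; apply: upos. Qed.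

Lemma logn_bound p n x : 0 < x <= n -> logn p (u x) <= \max_(y < n.+1) logn p (u y).
Proof.
move=> h; have hx : x < n.+1 by lia.
exact: (@bigop.leq_bigmax _ (fun y : 'I_n.+1 => logn p (u y)) (Ordinal hx)).
Qed.

Lemma den_dvd n m : m <= n -> den m %| num n m.
Proof.
move=> hmn; have [->|mpos] := posnP m; first by rewrite /den big_ord0 dvd1n.
apply/(dvdn_partP _ (den_pos m)) => p; rewrite mem_primes => /andP[pp _].
rewrite p_part pfactor_dvdn // ?num_pos //.
rewrite /num /den (@logn_prod p _ (fun i => u i.+1)) ?(@logn_prod p _ (fun i => u (n - i))); try by move=> i hi; apply: upos; lia.
have hm : 0 < m <= n by rewrite mpos hmn.
have hL : forall i, i < m -> logn p (u (n - i)) <= \max_(y < n.+1) logn p (u y).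
  by move=> i hi; apply: logn_bound; lia.
by have [h _] := key pp hm (fun x hx => logn_bound p hx) hL (leqnn _).
Qed.

Lemma main_val p n k m : prime p -> 0 < m <= k -> k <= n ->
  exists i, i < k /\ logn p (u m * (num n m %/ den m)) <= logn p (u (n - i)).
Proof.
move=> pp hm hkn.
have kpos : 0 < #|'I_k| by rewrite card_ord; lia.
have [i0 hi0] := bigop.eq_bigmax (fun i : 'I_k => logn p (u (n - i))) kpos.
exists i0; split => //.
set L := \max_(i < k) logn p (u (n - i)) in hi0.
rewrite -hi0.
have hmn : m <= n by lia.
have hq := divnK (den_dvd hmn).
set q := num n m %/ den m in hq *.
have qpos : 0 < q.
  by move: (num_pos hmn); rewrite -hq muln_gt0 => /andP[].
have e : logn p (u m * q) + logn p (den m) = logn p (u m) + logn p (num n m).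
  rewrite -hq !lognM ?upos ?den_pos ?muln_gt0 ?upos ?qpos //; try lia.
have hm' : 0 < m <= n by case/andP: hm => -> _.
have hL : forall i, i < m -> logn p (u (n - i)) <= L.
  move=> i hi; have hik : i < k by lia.
  exact: (@bigop.leq_bigmax _ (fun i : 'I_k => logn p (u (n - i))) (Ordinal hik)).
have hLN : L <= \max_(y < n.+1) logn p (u y).
  rewrite hi0; apply: logn_bound; have := ltn_ord i0; lia.
have [_ h] := key pp hm' (fun x hx => logn_bound p hx) hL hLN.
- move: h; rewrite /num /den (@logn_prod p _ (fun i => u i.+1)) ?(@logn_prod p _ (fun i => u (n - i))) in e; first lia.
  + by move=> i hi; apply: upos; lia.
  + by move=> i _; apply: upos.
Qed.


Lemma lcml_dvd (s : seq nat) d : (foldr lcmn 1 s %| d) = all (fun x => x %| d) s.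
Proof. by elim: s => [|x s IH] /=; rewrite ?dvd1n // dvdn_lcm IH. Qed.

Lemma dvd_lcml (s : seq nat) x : x \in s -> x %| foldr lcmn 1 s.
Proof.
move=> xs; have : all (fun y => y %| foldr lcmn 1 s) s by rewrite -lcml_dvd.
by move/allP; apply.
Qed.

Lemma lcml_pos (s : seq nat) : all (fun x => 0 < x) s -> 0 < foldr lcmn 1 s.
Proof. by elim: s => [|x s IH] //= /andP[hx hs]; rewrite lcmn_gt0 hx IH. Qed.

Lemma nat_main n k : 0 < k <= n ->
  foldr lcmn 1 [seq u (n - i) | i <- iota 0 k] =
  foldr lcmn 1 [seq u m * (num n m %/ den m) | m <- iota 1 k].
Proof.
move=> hk.
have Xpos : forall m, 0 < m <= n -> 0 < u m * (num n m %/ den m).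
  move=> m hm; rewrite muln_gt0 upos; last by case/andP: hm.
  have hmn : m <= n by case/andP: hm.
  have hq := divnK (den_dvd hmn); move: (num_pos hmn).
  set q := num n m %/ den m in hq *.
  by rewrite -hq muln_gt0 => /andP[].
apply/eqP; rewrite eqn_dvd; apply/andP; split.
  rewrite lcml_dvd; apply/allP => x /mapP[i]; rewrite mem_iota add0n => hi ->.
  have hi1 : i.+1 \in iota 1 k by rewrite mem_iota; lia.
  apply: dvdn_trans (dvd_lcml (map_f (fun m => u m * (num n m %/ den m)) hi1)).
  have hin : i <= n by lia.
  have hin1 : i.+1 <= n by lia.
  have hq := divnK (den_dvd hin); have hq' := divnK (den_dvd hin1).
  move: hq hq'; rewrite {2 4}/num {2 4}/den !big_ord_recr /= -/(num n i) -/(den i).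
  set q := num n i %/ den i; set q' := num n i.+1 %/ den i.+1.
  move=> hq hq'.
  have e : u i.+1 * q' * den i = u (n - i) * q * den i.
    have -> : u i.+1 * q' * den i = q' * (den i * u i.+1) by rewrite mulnC mulnA mulnC mulnA.
    rewrite hq' -hq.
    by rewrite mulnAC [u (n - i) * q]mulnC.
  have e' : u i.+1 * q' = u (n - i) * q by apply/eqP; rewrite -(eqn_pmul2r (den_pos i)) e.
  by rewrite e' dvdn_mulr.
rewrite lcml_dvd; apply/allP => x /mapP[m]; rewrite mem_iota => hm ->.
have hm' : 0 < m <= n by lia.
have Lpos : 0 < foldr lcmn 1 [seq u (n - i) | i <- iota 0 k].
  by apply: lcml_pos; apply/allP => y /mapP[i]; rewrite mem_iota => hi ->; apply: upos; lia.
apply/(dvdn_partP _ (Xpos m hm')) => p; rewrite mem_primes => /andP[pp _].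
rewrite p_part pfactor_dvdn //.
have hmk : 0 < m <= k by lia.
have hkn : k <= n by lia.
have [i [hik hle]] := main_val pp hmk hkn.
apply: (leq_trans hle); apply: dvdn_leq_log => //.
by apply: dvd_lcml; apply: map_f; rewrite mem_iota; lia.
Qed.

End Abs.

Local Open Scope ring_scope.

Lemma lcm_list_map (T : Type) (f : T -> int) (s : seq T) :
  lcm_list [seq f x | x <- s] = (foldr lcmn 1 [seq `|f x|%N | x <- s])%:Z.
Proof. by elim: s => [|x s IH] //=; rewrite IH /lcmz. Qed.

Lemma absz_prod m (f : nat -> int) : absz (\prod_(i < m) f i)%R = (\prod_(i < m) absz (f i))%N.
Proof.
elim: m => [|m IH]; first by rewrite !big_ord0.
by rewrite !big_ord_recr /= abszM IH.
Qed.

Theorem theorem7 (P Q : int) :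
  P != 0 -> Q != 0 -> coprimez P Q -> P ^+ 2 - 4 * Q != 0 ->
  (forall alpha beta : algC,
     alpha + beta = P%:~R -> alpha * beta = Q%:~R ->
     forall r : nat, (0 < r)%N -> (alpha / beta) ^+ r != 1) ->
  forall n k : nat, (1 <= k)%N -> (k <= n)%N ->
    lcm_list [seq lucasU P Q (n - i) | i <- iota 0 k]
    = lcm_list [seq lucasU P Q m * lucas_binom P Q n m | m <- iota 1 k].
Proof.
move=> hP hQ cPQ hD H n k hk hkn.
have u0 : u P Q 0 = 0%N by [].
have upos : forall x, (0 < x)%N -> (0 < u P Q x)%N.
  by move=> x hx; rewrite /u absz_gt0 U_neq0.
have ugcd := u_gcd cPQ.
rewrite !lcm_list_map; congr Posz.
have hkk : (0 < k <= n)%N by rewrite hk hkn.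
rewrite -/(u P Q) (nat_main u0 upos ugcd hkk).
congr foldr; apply/eq_in_map => m; rewrite mem_iota => hm.
rewrite abszM; congr muln.
rewrite /lucas_binom /lucas_fact.
set a := \prod_(0 <= i < m) lucasU P Q (n - i).
set b := \prod_(1 <= i < m.+1) lucasU P Q i.
have ea : `|a|%N = num (u P Q) n m by rewrite /a big_mkord (@absz_prod m (fun i => lucasU P Q (n - i))).
have eb : `|b|%N = den (u P Q) m by rewrite /b big_add1 /= big_mkord (@absz_prod m (fun i => lucasU P Q i.+1)).
have hmn : (m <= n)%N by lia.
have dba : (b %| a)%Z by rewrite /dvdz unfold_in /= ea eb den_dvd.
have := divzK dba; move: (a %/ b)%Z => q e.
rewrite -ea -e abszM eb mulnK //; exact: den_pos.
Qed.
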